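(* Assume the standing setting in the context. Fix $e\in\mathcal E^d$, $M>0$, $x\in\mathbb Z^d$, and suppose $e\in\pi^{(x)}$ and $\tau_e\ge M$. Then for any $k\in\mathbb N$ such that ${S^e_k}'$ encloses neither $0$ nor $x$, the edge $e$ is $(k,M)$-large.
   Context: Setting: $d\ge2$, i.i.d. non-negative weights $\tau_e$ on the nearest-neighbor edges $\mathcal E^d$ of $\mathbb Z^d$, with the standing assumption $F(r)<p_c(d)$ if $r=0$ and $F(r)<\vec p_c(d)$ if $r>0$ ($F$ the distribution function, $r$ the essential infimum, $p_c,\vec p_c$ the bond and oriented bond percolation thresholds). $T(\gamma)=\sum_{e\in\gamma}\tau_e$; $\pi^{(x)}$ is the first (in a fixed deterministic ordering of finite vertex self-avoiding paths) vertex self-avoiding path from $0$ to $x$ minimizing $T$. For $e=\{a,b\}$ let $v_e$ be the endpoint of smaller $\ell^1$ norm. For $k\ge1$: ${S^e_k}'=\{z\in\mathbb Z^d:|v_e-z|_\infty=k\}$ and $S^e_k=\{\{u,w\}\in\mathcal E^d:u,w\in{S^e_k}'\}$; ${S^e_0}'$ is the set of the two endpoints of $e$ and $S^e_0=\{e\}$. For $u,w\in{S^e_h}'$, $T_{S^e_h}(u,w)$ is the minimum of $T(\gamma)$ over self-avoiding paths from $u$ to $w$ using only edges of $S^e_h$. The edge $e$ is $(k,M)$-large if for each $h=0,1,\dots,k$ there exist $u,w\in{S^e_h}'$ with $T_{S^e_h}(u,w)\ge M$. A set ${S^e_k}'$ encloses a vertex $y$ if $y$ is not in the unbounded component of $\mathbb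 Z^d\setminus{S^e_k}'$. *)

(* Defs.v *)
From mathcomp Require Import all_boot all_order all_algebra.
From mathcomp Require Import reals.
Set Implicit Arguments. Unset Strict Implicit. Unset Printing Implicit Defensive.
Import Order.TTheory GRing.Theory Num.Theory.
Local Open Scope ring_scope.

Definition V (d : nat) := {ffun 'I_d -> int}.

Definition origin (d : nat) : V d := [ffun => 0].

Definition l1dist d (u w : V d) : nat := (\sum_(i < d) `|u i - w i|%N)%N.
Definition linfdist d (u w : V d) : nat := (\max_(i < d) `|u i - w i|%N)%N.
Definition l1norm d (u : V d) : nat := l1dist u (origin d).
Definition linfnorm d (u : V d) : nat := linfdist u (origin d).

Definition adj d : rel (V d) := fun u w => l1dist u w == 1%N.

(* A (vertex) path is u :: s; it goes from u to w and is self-avoiding *)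
Definition sa_path d (u : V d) (s : seq (V d)) (w : V d) : Prop :=
  [/\ path (@adj d) u s, last u s = w & uniq (u :: s)].

Definition steps d (u : V d) (s : seq (V d)) : seq (V d * V d) := zip (u :: s) s.

(* edge weights: tau u w is the weight of the undirected edge {u,w}
   (required symmetric and nonnegative); T(gamma) = sum of weights of its edges *)
Definition passage_time {R : realType} d (tau : V d -> V d -> R)
  (u : V d) (s : seq (V d)) : R :=
  \sum_(p <- steps u s) tau p.1 p.2.

Definition edge_in_path d (a b : V d) (u : V d) (s : seq (V d)) : Prop :=
  exists2 p, p \in steps u s & (p = (a, b) \/ p = (b, a)).

Definition geodesic {R : realType} d (tau : V d -> V d -> R)
  (s : seq (V d)) (x : V d) : Prop :=
  sa_path (origin d) s x /\
  forall s', sa_path (origin d) s' x ->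
    passage_time tau (origin d) s <= passage_time tau (origin d) s'.

Definition ve d (a b : V d) : V d := if (l1norm a <= l1norm b)%N then a else b.

Definition sphV d (a b : V d) (h : nat) (z : V d) : Prop :=
  if h == 0%N then z = a \/ z = b else linfdist (ve a b) z = h.

Definition sphE d (a b : V d) (h : nat) (u w : V d) : Prop :=
  if h == 0%N then (u = a /\ w = b) \/ (u = b /\ w = a)
  else adj u w /\ sphV a b h u /\ sphV a b h w.

(* T_{S^e_h}(u,w) >= M, where T_{S^e_h}(u,w) is the minimum of T over
   self-avoiding paths from u to w using only edges of S^e_h (the minimum
   over an empty family being +infinity). *)
Definition TS_ge {R : realType} d (tau : V d -> V d -> R) (a b : V d) (h : nat)
  (u w : V d) (M : R) : Prop :=
  forall s, sa_path u s w -> (forall p, p \in steps u s -> sphE a b h p.1 p.2) ->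
    M <= passage_time tau u s.

Definition large {R : realType} d (tau : V d -> V d -> R) (a b : V d)
  (k : nat) (M : R) : Prop :=
  forall h, (h <= k)%N ->
    exists u w, [/\ sphV a b h u, sphV a b h w & TS_ge tau a b h u w M].

Definition in_unbounded_comp d (S : V d -> Prop) (y : V d) : Prop :=
  forall N : nat, exists s, [/\ path (@adj d) y s,
    (forall v, v \in y :: s -> ~ S v) & (N <= linfnorm (last y s))%N].

Definition encloses d (S : V d -> Prop) (y : V d) : Prop :=
  ~ in_unbounded_comp S y.

(* Main.v *)
Require Import Defs.
From mathcomp Require Import all_boot all_order all_algebra.
From mathcomp Require Import reals.
From mathcomp Require Import zify lra.
From Stdlib Require Import Classical.
Set Implicit Arguments. Unset Strict Implicit.
Import Order.TTheory GRing.Theory Num.Theory.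
Local Open Scope ring_scope.

Lemma pt_nil (R : realType) d (tau : V d -> V d -> R) x :
  passage_time tau x [::] = 0.
Proof. by rewrite /passage_time /steps /= big_nil. Qed.

Lemma pt_cons (R : realType) d (tau : V d -> V d -> R) x y p :
  passage_time tau x (y :: p) = tau x y + passage_time tau y p.
Proof. by rewrite /passage_time /steps /= big_cons. Qed.

Lemma pt_cat (R : realType) d (tau : V d -> V d -> R) x p q :
  passage_time tau x (p ++ q) =
  passage_time tau x p + passage_time tau (last x p) q.
Proof.
elim: p x => [|y p IH] x /=; first by rewrite pt_nil add0r.
by rewrite !pt_cons IH addrA.
Qed.

Lemma pt_ge0 (R : realType) d (tau : V d -> V d -> R)
  (hn : forall u w, 0 <= tau u w) x p : 0 <= passage_time tau x p.
Proof.
elim: p x => [|y p IH] x; first by rewrite pt_nil.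
by rewrite pt_cons; apply: addr_ge0.
Qed.

Lemma suffix_sa (R : realType) d (tau : V d -> V d -> R)
  (hn : forall u w, 0 <= tau u w) (y x w : V d) p' p1 p2 :
  sa_path y p' w -> y :: p' = p1 ++ x :: p2 ->
  sa_path x p2 w /\ passage_time tau x p2 <= passage_time tau y p'.
Proof.
case: p1 => [|z p1] /=.
  by move=> hs [ey ep]; subst; split.
move=> [hp hl hu] [ez ep]; subst z p'.
rewrite cat_path /= in hp; case/and3P: hp => _ _ hp2.
split; first split => //.
- by rewrite last_cat in hl.
- by move: hu; rewrite -cat_cons cat_uniq => /and3P[].
rewrite pt_cat /= pt_cons.
have := pt_ge0 hn y p1; have := hn (last y p1) x. lra.
Qed.

Lemma loop_erase (R : realType) d (tau : V d -> V d -> R)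
  (hn : forall u w, 0 <= tau u w) x p :
  path (@adj d) x p -> exists p', sa_path x p' (last x p) /\
     passage_time tau x p' <= passage_time tau x p.
Proof.
elim: p x => [|y p IH] x /=.
  by move=> _; exists [::]; split.
move=> /andP [hxy hp]; have [p' [hsa hle]] := IH y hp.
case: (boolP (x \in y :: p')) => hx.
  have [p1 [p2 E]] : exists p1 p2, y :: p' = p1 ++ x :: p2.
    by case/splitPr: hx => p1 p2; exists p1, p2.
  have [hsa2 hle2] := suffix_sa hn hsa E.
  exists p2; split => //.
  rewrite pt_cons; have := hn x y; lra.
exists (y :: p'); case: hsa => hp' hl hu; split.
  by split => //=; rewrite ?hxy ?hp' ?hx.
by rewrite !pt_cons lerD2l.
Qed.

Lemma steps_split d (x y z : V d) p : (y, z) \in steps x p ->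
  exists p1 p2, p = p1 ++ z :: p2 /\ last x p1 = y.
Proof.
elim: p x => [|w p IH] x //=.
rewrite /steps /= in_cons => /orP [/eqP [-> ->] | h].
  by exists [::], p.
have [p1 [p2 [E L]]] := IH w h.
by exists (w :: p1), p2; rewrite E.
Qed.

Lemma ivt d (f : V d -> nat)
  (hf : forall u w, adj u w -> (f w <= (f u).+1 /\ f u <= (f w).+1)%N)
  x p h : path (@adj d) x p ->
  ((f x <= h <= f (last x p)) || (f (last x p) <= h <= f x))%N ->
  exists q1 q2, p = q1 ++ q2 /\ f (last x q1) = h.
Proof.
elim: p x => [|y p IH] x /=.
  move=> _ hh; exists [::], [::]; split => //=.
  by case/orP: hh => /andP [h1 h2]; apply/eqP; rewrite eqn_leq ?h1 ?h2.
move=> /andP [hxy hp] hh.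
case: (eqVneq (f x) h) => [e|ne]; first by exists [::], (y :: p).
have hh' : ((f y <= h <= f (last y p)) || (f (last y p) <= h <= f y))%N.
  have [h1 h2] := hf _ _ hxy.
  case/orP: hh => /andP [h3 h4]; [apply/orP; left | apply/orP; right];
    apply/andP; lia.
have [q1 [q2 [E L]]] := IH y hp hh'.
by exists (y :: q1), q2; rewrite E.
Qed.

Lemma linf_tri d (u v w : V d) : (linfdist u w <= linfdist u v + linfdist v w)%N.
Proof.
rewrite /linfdist; apply/bigmax_leqP => i _.
apply: leq_trans (leq_add (leq_bigmax i) (leq_bigmax i)) => /=.
lia.
Qed.

Lemma linf_sym d (u w : V d) : linfdist u w = linfdist w u.
Proof. by rewrite /linfdist; apply: eq_bigr => i _; rewrite -abszN opprB. Qed.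

Lemma linf_le_l1 d (u w : V d) : (linfdist u w <= l1dist u w)%N.
Proof.
rewrite /linfdist /l1dist; apply/bigmax_leqP => i _.
by rewrite (bigD1 i) //= leq_addr.
Qed.

Lemma linf_refl d (u : V d) : linfdist u u = 0%N.
Proof.
apply/eqP; rewrite -leqn0; apply/bigmax_leqP => i _; by rewrite subrr.
Qed.

Lemma l1_refl d (u : V d) : l1dist u u = 0%N.
Proof. by rewrite /l1dist big1 // => i _; rewrite subrr. Qed.

Lemma adj_neq d (a b : V d) : adj a b -> a <> b.
Proof. by move=> hab e; move: hab; rewrite e /adj l1_refl. Qed.

Lemma lip d (v : V d) u w : adj u w ->
  (linfdist v w <= (linfdist v u).+1 /\ linfdist v u <= (linfdist v w).+1)%N.
Proof.
move=> /eqP h; have h1 := linf_le_l1 u w; rewrite h in h1.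
have t1 := linf_tri v u w; have t2 := linf_tri v w u.
rewrite (linf_sym w u) in t2. lia.
Qed.

Lemma ve_close d (a b y : V d) : adj a b -> y = a \/ y = b ->
  (linfdist (ve a b) y <= 1)%N.
Proof.
move=> /eqP hab hy; have h1 := linf_le_l1 a b; rewrite hab in h1.
rewrite /ve; case: ifP => _; case: hy => ->;
  rewrite ?linf_refl // ?(linf_sym b a) //.
Qed.

Lemma far d (a b : V d) k (y : V d) : (0 < k)%N ->
  ~ encloses (sphV a b k) y -> (k < linfdist (ve a b) y)%N.
Proof.
move=> kpos hy; have hu : in_unbounded_comp (sphV a b k) y by apply: NNPP.
set v := ve a b.
have [t [hp hav hN]] := hu (linfnorm v + k + 1)%N.
rewrite ltnNge; apply/negP => hle.
have t1 := linf_tri (last y t) v (origin d).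
rewrite /linfnorm in hN; rewrite /linfnorm (linf_sym (last y t) v) in t1.
have [q1 [q2 [E L]]] := @ivt d (linfdist v) (@lip d v) y t k hp
  (ltac:(apply/orP; left; apply/andP; split; lia)).
apply: (hav (last y q1)).
  have : last y q1 \in y :: q1 := mem_last _ _.
  by rewrite E !in_cons mem_cat => /orP [->|->]; rewrite ?orbT.
by rewrite /sphV; case: eqP => [k0|_]; [rewrite k0 in kpos|].
Qed.

Lemma arith (R : realType) (P A B C Q D G M : R) :
  P <= A + (B + C) -> 0 <= D -> 0 <= Q -> A + Q + (G + (D + C)) <= P ->
  B < M -> M <= G -> False.
Proof. move=> *; lra. Qed.

Theorem lemma3p1 (R : realType) (d : nat) (hd : (2 <= d)%N)
  (tau : V d -> V d -> R)
  (tau_sym : forall u w, tau u w = tau w u)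
  (tau_nonneg : forall u w, 0 <= tau u w)
  (a b : V d) (hab : adj a b) (M : R) (hM : 0 < M) (x : V d)
  (s : seq (V d)) (hgeo : geodesic tau s x)
  (he : edge_in_path a b (origin d) s) (htau : M <= tau a b)
  (k : nat)
  (h0 : ~ encloses (sphV a b k) (origin d))
  (hx : ~ encloses (sphV a b k) x) :
  large tau a b k M.
Proof.
move=> h hk.
case: (posnP h) => [->|hpos].
  exists a, b; split; rewrite /sphV /=; [by left|by right|].
  move=> s' [hp hl hu] hst; case: s' hp hl hu hst => [|v s'] /=.
    by move=> _ e; case: (adj_neq hab).
  move=> _ _ _ hst.
  have := hst (a, v); rewrite /steps /= mem_head => /(_ isT).
  rewrite /sphE /= => [[[_ ev]|[eab _]]]; last by case: (adj_neq hab).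
  rewrite ev pt_cons; have := pt_ge0 tau_nonneg b s'; lra.
have kpos : (0 < k)%N by apply: leq_trans hk.
have F0 := far kpos h0; have F1 := far kpos hx.
set v := ve a b in F0 F1 *.
case: hgeo => [[hpath hlast huniq] hmin].
case: he => [[y z] hyz ep].
have [ey ez tyz] : [/\ y = a \/ y = b, z = a \/ z = b & M <= tau y z].
  by case: ep => [[-> ->]|[-> ->]]; split; auto; rewrite // tau_sym.
have fy := ve_close hab ey; have fz := ve_close hab ez; rewrite -/v in fy fz.
have [p1 [p2 [E Ly]]] := steps_split hyz.
have hp := hpath; rewrite E cat_path Ly /= in hp.
case/and3P: hp => hp1 _ hp2.
have lx : last z p2 = x by rewrite -hlast E last_cat Ly.
have [q1 [q2 [E1 Lu]]] := @ivt d (linfdist v) (@lip d v) _ p1 h hp1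
  (ltac:(rewrite Ly; apply/orP; right; apply/andP; split; lia)).
have [r1 [r2 [E2 Lw]]] := @ivt d (linfdist v) (@lip d v) _ p2 h hp2
  (ltac:(rewrite lx; apply/orP; left; apply/andP; split; lia)).
set u := last (origin d) q1 in Lu.
set w := last z r1 in Lw.
have sph : forall t, linfdist v t = h -> sphV a b h t.
  by move=> t ht; rewrite /sphV; case: eqP => [h0'|_]; [rewrite h0' in hpos|].
exists u, w; split; try by apply: sph.
move=> s' [hp' hl' hu'] _.
rewrite leNgt; apply/negP => hlt.
have hpq1 : path (@adj d) (origin d) q1 by move: hp1; rewrite E1 cat_path => /andP[].
have hpr2 : path (@adj d) w r2 by move: hp2; rewrite E2 cat_path => /andP[].
have hwalk : path (@adj d) (origin d) (q1 ++ s' ++ r2).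
  by rewrite cat_path hpq1 /= cat_path hp' hl' hpr2.
have lwalk : last (origin d) (q1 ++ s' ++ r2) = x.
  by rewrite !last_cat hl' -lx E2 last_cat.
have [p'' [hsa hle]] := loop_erase tau_nonneg hwalk.
rewrite lwalk in hsa.
have := hmin _ hsa.
rewrite E pt_cat Ly pt_cons E1 E2 !pt_cat -/u -/w.
have := pt_ge0 tau_nonneg u q2; have := pt_ge0 tau_nonneg z r1.
move: hle; rewrite !pt_cat -/u hl'.
move=> H1 H2 H3 H4; exact: (arith H1 H2 H3 H4 (M:=M) hlt tyz).
Qed.
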